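(* For integers $k\geq l\geq 0$ and $n\geq 0$, let $q^*_n(k,l)$ be the number of ways to write the vector $(k,l)$ as an unordered sum of $n$ vectors (a vector partition into $n$ parts) each lying in $\{(0,0),(1,0),(0,1),(1,1)\}$, where each of $(0,0)$ and $(1,1)$ is used at most once while $(1,0)$ and $(0,1)$ may be used any number of times. Then $$\{S_{(k,l)'}\}_n=\begin{cases}q^*_n(k,l)-q^*_n(k+1,l-1)&\text{if } l>0,\\ q^*_n(k,l)&\text{if } l=0.\end{cases}$$
   Context: For $i\geq1$, $X_i(\sigma)$ is the number of $i$-cycles of $\sigma$. For a partition $\alpha=1^{a_1}2^{a_2}\cdots$ let $\binom X\alpha=\prod_i\binom{X_i}{a_i}$, $|\alpha|=\sum ia_i$, $l(\alpha)=\sum a_i$. For $m\geq0$ let $E_m=\sum_{\alpha\vdash m}(-1)^{|\alpha|-l(\alpha)}\binom X\alpha$ (so $E_0=1$), and set $E_m=0$ for $m<0$. Define $S_{(k,l)'}=E_kE_l-E_{k+1}E_{l-1}$ (the character polynomial of $W_{(k,l)'}(\mathbb C^n)$, $(k,l)'$ the conjugate partition). The signed moment of $p\in\mathbb C[X_1,X_2,\dotsc]$ is $\{p\}_n=\frac1{n!}\sum_{\sigma\in S_n}\mathrm{sgn}(\sigma)p(X_1(\sigma),X_2(\sigma),\dotsc)$. *)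

(* Defs.v *)
From HB Require Import structures.
From mathcomp Require Import all_boot all_order all_algebra all_fingroup.
Set Implicit Arguments. Unset Strict Implicit. Unset Printing Implicit Defensive.
Import Order.TTheory GRing.Theory Num.Theory.
Local Open Scope ring_scope.

Definition cyc (n : nat) (s : 'S_n) (i : nat) : nat :=
  #|[set c in porbits s | #|c| == i]|.

(* A partition alpha = 1^{a_1} 2^{a_2} ... of m is encoded by its multiplicity
   vector a : 'I_m.+1 -> 'I_m.+1 (a i = a_i), with a_0 = 0 and sum i a_i = m. *)
Definition is_partn (m : nat) (a : {ffun 'I_m.+1 -> 'I_m.+1}) : bool :=
  (a ord0 == ord0 :> 'I_m.+1) && (\sum_(i < m.+1) i * a i == m)%N.

Definition binomX (X : nat -> nat) (m : nat) (a : {ffun 'I_m.+1 -> 'I_m.+1}) : nat :=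
  (\prod_(i < m.+1) 'C(X i, a i))%N.

Definition lenp (m : nat) (a : {ffun 'I_m.+1 -> 'I_m.+1}) : nat :=
  (\sum_(i < m.+1) a i)%N.

Definition Ecp (m : nat) (X : nat -> nat) : rat :=
  \sum_(a : {ffun 'I_m.+1 -> 'I_m.+1} | is_partn a)
     (-1) ^+ (m - lenp a) * (binomX X a)%:R.

(* S_{(k,l)'} = E_k E_l - E_{k+1} E_{l-1}, with E_{-1} = 0. *)
Definition Scp (k l : nat) (X : nat -> nat) : rat :=
  Ecp k X * Ecp l X -
  (if l is l'.+1 then Ecp k.+1 X * Ecp l' X else 0).

Definition smoment (n : nat) (p : (nat -> nat) -> rat) : rat :=
  (n`!)%:R^-1 * \sum_(s : 'S_n) (-1) ^+ (odd_perm s) * p (cyc s).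

(* A multiset is its
   multiplicity vector (a,b,c,d) for (0,0),(1,0),(0,1),(1,1); a,d in {0,1},
   and b,c <= n automatically since a+b+c+d = n. *)
Definition qstar (n k l : nat) : nat :=
  #|[set t : 'I_2 * 'I_n.+1 * 'I_n.+1 * 'I_2 |
     let: (a, b, c, d) := t in
     [&& (a + b + c + d == n)%N,
         (b * 1 + c * 0 + d * 1 == k)%N &
         (b * 0 + c * 1 + d * 1 == l)%N]]|.

(* Main.v *)
Require Import Defs.
From mathcomp Require Import all_boot all_order all_algebra all_fingroup.
From mathcomp Require Import zify ring.
Import GRing.Theory Num.Theory.
Set Implicit Arguments. Unset Strict Implicit. Unset Printing Implicit Defensive.
Local Open Scope ring_scope.
Lemma mem_cover_porbits n (s : {perm 'I_n}) (V : {set {set 'I_n}}) z :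
  V \subset porbits s -> (z \in cover V) = (porbit s z \in V).
Proof.
move=> sV; apply/bigcupP/idP => [[c Vc zc]|Vz]; last by exists (porbit s z) => //; apply: porbit_id.
have /imsetP[y _ cy] := subsetP sV c Vc.
by move: zc; rewrite cy -eq_porbit_mem => /eqP ->; rewrite -cy.
Qed.

Lemma trivIset_porbits n (s : {perm 'I_n}) : trivIset (porbits s).
Proof.
apply/trivIsetP => A B /imsetP[x _ ->] /imsetP[y _ ->] neq.
apply/pred0P => z /=; apply/negbTE/negP => /andP[zx zy].
move: neq; rewrite -eq_porbit_mem in zx; rewrite -eq_porbit_mem in zy.
by rewrite -(eqP zx) (eqP zy) eqxx.
Qed.

Lemma cover_porbits n (s : {perm 'I_n}) : cover (porbits s) = setT.
Proof. by apply/setP => z; rewrite (@mem_cover_porbits _ s) // inE imset_f. Qed.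

Lemma card_cover_porbits n (s : {perm 'I_n}) (V : {set {set 'I_n}}) :
  V \subset porbits s -> #|cover V| = (\sum_(c in V) #|c|)%N.
Proof.
move=> sV; have /trivIsetS/(_ (trivIset_porbits s)) := sV.
by rewrite /trivIset => /eqP.
Qed.

Lemma porbits_card_gt0 n (s : {perm 'I_n}) c : c \in porbits s -> (0 < #|c|)%N.
Proof. by case/imsetP => y _ ->; rewrite lt0n card_porbit_neq0. Qed.

Lemma card_le_cover n (s : {perm 'I_n}) (V : {set {set 'I_n}}) :
  V \subset porbits s -> (#|V| <= #|cover V|)%N.
Proof.
move=> sV; rewrite (card_cover_porbits sV) -sum1_card leq_sum // => c Vc.
exact: porbits_card_gt0 (subsetP sV c Vc).
Qed.

Lemma cover_compl n (s : {perm 'I_n}) (V : {set {set 'I_n}}) :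
  V \subset porbits s -> cover (porbits s :\: V) = ~: cover V.
Proof.
move=> sV; apply/setP => z; rewrite inE !(@mem_cover_porbits _ s) ?subsetDl //.
by rewrite inE imset_f ?andbT.
Qed.

Lemma porbit_in_inv n (s : {perm 'I_n}) (S : {set 'I_n}) z i :
  s @: S = S -> z \in S -> (s ^+ i)%g z \in S.
Proof.
move=> sS zS; elim: i => [|i IH]; first by rewrite expg0 perm1.
by rewrite expgSr permM -sS imset_f.
Qed.

Lemma cover_inv n (s : {perm 'I_n}) (S : {set 'I_n}) :
  s @: S = S -> cover [set c in porbits s | c \subset S] = S.
Proof.
move=> sS; apply/setP => z; rewrite (@mem_cover_porbits _ s); last first.
  by apply/subsetP => c; rewrite inE => /andP[].
rewrite inE imset_f //=; apply/subsetP/idP => [H|zS y]; first by apply: H; apply: porbit_id.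
by case/porbitP => i ->; apply: porbit_in_inv.
Qed.

Lemma cover_fix n (s : {perm 'I_n}) (V : {set {set 'I_n}}) :
  V \subset porbits s -> s @: cover V = cover V.
Proof.
move=> sV; apply/eqP; rewrite eqEcard card_imset ?leqnn ?andbT //; last exact: perm_inj.
apply/subsetP => y /imsetP[z zV ->]; rewrite (@mem_cover_porbits _ s) //.
by rewrite -(expg1 s) porbit_perm -mem_cover_porbits.
Qed.

Lemma cover_inj n (s : {perm 'I_n}) (V W : {set {set 'I_n}}) :
  V \subset porbits s -> W \subset porbits s -> cover V = cover W -> V = W.
Proof.
move=> sV sW eVW.
have key c : c \in porbits s -> (c \in V) = (c \in W).
  case/imsetP => y _ ->.
  by rewrite -(mem_cover_porbits _ sV) -(mem_cover_porbits _ sW) eVW.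
apply/setP => c; apply/idP/idP => Hc.
  by rewrite -key // (subsetP sV).
by rewrite key // (subsetP sW).
Qed.

Definition gs n (c : {set 'I_n}) : rat := (-1) ^+ (#|c| + 1).
Definition wv n (V : {set {set 'I_n}}) : rat := (-1) ^+ (#|cover V| + #|V|).

Lemma sign_sub (a b : nat) : (b <= a)%N -> (-1) ^+ (a - b) = (-1) ^+ (a + b) :> rat.
Proof. by move=> ba; rewrite -signr_odd oddB // -oddD signr_odd. Qed.

Lemma wv_prod n (s : {perm 'I_n}) (V : {set {set 'I_n}}) :
  V \subset porbits s -> wv V = \prod_(c in V) gs c.
Proof.
move=> sV; rewrite /wv (card_cover_porbits sV) -sum1_card -big_split /=.
by rewrite (big_morph (fun e => (-1) ^+ e : rat) (exprD (-1)) (expr0 _)).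
Qed.

Lemma sg_wv n (s : {perm 'I_n}) : (-1) ^+ odd_perm s = wv (porbits s).
Proof.
by rewrite /wv cover_porbits cardsT card_ord -[RHS]signr_odd oddD /odd_perm card_ord.
Qed.

Lemma wv_sqr n (V : {set {set 'I_n}}) : wv V * wv V = 1.
Proof. by rewrite -expr2 sqrr_sign. Qed.

Lemma wv_compl n (s : {perm 'I_n}) (V : {set {set 'I_n}}) :
  V \subset porbits s -> wv (porbits s :\: V) = wv (porbits s) * wv V.
Proof.
move=> sV; rewrite !(wv_prod (s := s)) ?subsetDl // (@big_setID _ _ _ _ (porbits s) V) /=.
rewrite (setIidPr sV) -(wv_prod sV) -(wv_prod (s := s)) ?subsetDl //.
by rewrite mulrC mulrA wv_sqr mul1r.
Qed.

Definition Acell n (P Q : {set {set 'I_n}}) := ~: (cover P :|: cover Q).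
Definition Dcell n (P Q : {set {set 'I_n}}) := cover P :&: cover Q.

Definition good n k l (z : {perm 'I_n} * ({set {set 'I_n}} * {set {set 'I_n}})) :=
  [&& z.2.1 \subset porbits z.1, z.2.2 \subset porbits z.1,
      #|cover z.2.1| == k & #|cover z.2.2| == l].

Definition wtz n (z : {perm 'I_n} * ({set {set 'I_n}} * {set {set 'I_n}})) : rat :=
  (-1) ^+ odd_perm z.1 * wv z.2.1 * wv z.2.2.

Definition hinv n (z : {perm 'I_n} * ({set {set 'I_n}} * {set {set 'I_n}})) :=
  match enum (Acell z.2.1 z.2.2) with
  | x :: y :: _ => ((tperm x y * z.1)%g, z.2)
  | _ => z end.

Lemma porbit_tperm n (s : {perm 'I_n}) x y z :
  x \notin porbit s z -> y \notin porbit s z ->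
  porbit (tperm x y * s)%g z = porbit s z.
Proof.
move=> xz yz.
have exp_id i : ((tperm x y * s) ^+ i)%g z = (s ^+ i)%g z.
  elim: i => [|i IH]; first by rewrite !expg0.
  rewrite !expgSr !permM IH tpermD //.
    by apply: contraNneq xz => ->; apply: mem_porbit.
  by apply: contraNneq yz => ->; apply: mem_porbit.
apply/setP => u; apply/porbitP/porbitP => -[i ->]; exists i; by rewrite exp_id.
Qed.

Lemma sub_porbits_tperm n (s : {perm 'I_n}) x y (P : {set {set 'I_n}}) :
  x \notin cover P -> y \notin cover P -> P \subset porbits s ->
  P \subset porbits (tperm x y * s)%g.
Proof.
move=> xP yP sP; apply/subsetP => c Pc.
have /imsetP[z _ cz] := subsetP sP c Pc.
have sub : c \subset cover P by apply: bigcup_sup.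
have xc : x \notin porbit s z by rewrite -cz; apply: contra xP; apply: (subsetP sub).
have yc : y \notin porbit s z by rewrite -cz; apply: contra yP; apply: (subsetP sub).
by rewrite cz -(porbit_tperm xc yc) imset_f.
Qed.

Lemma hinvK n : involutive (@hinv n).
Proof.
move=> [s [P Q]]; rewrite /hinv /=.
case E: (enum (Acell P Q)) => [|x [|y r]] /=; rewrite ?E //.
by rewrite mulgA tperm2 mul1g.
Qed.

Lemma good_tperm n k l (s : {perm 'I_n}) x y (P Q : {set {set 'I_n}}) :
  x \notin cover P -> y \notin cover P -> x \notin cover Q -> y \notin cover Q ->
  good k l ((tperm x y * s)%g, (P, Q)) = good k l (s, (P, Q)).
Proof.
move=> xP yP xQ yQ; rewrite /good /=.
have e (V : {set {set 'I_n}}) : x \notin cover V -> y \notin cover V ->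
    (V \subset porbits (tperm x y * s)%g) = (V \subset porbits s).
  move=> xV yV; apply/idP/idP => H; last exact: sub_porbits_tperm.
  by rewrite -[s]mul1g -(tperm2 x y) -mulgA; apply: sub_porbits_tperm.
by rewrite !e.
Qed.

Lemma inv_zero n k l (R : {set {set 'I_n}} * {set {set 'I_n}} -> bool) :
  \sum_(z | good k l z && (1 < #|Acell z.2.1 z.2.2|)%N && R z.2) wtz z = 0.
Proof.
set F := \sum_(z | _) _.
have FN : F = - F.
  rewrite {1}/F (reindex_inj (can_inj (@hinvK n))) /= -sumrN.
  apply: eq_big => [[s [P Q]]|[s [P Q]]]; rewrite /hinv /=;
    case E: (enum (Acell P Q)) => [|x [|y r]] //=;
    try by move=> /andP[/andP[_]]; rewrite cardE E.
  - have xA : x \in Acell P Q by rewrite -mem_enum E mem_head.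
    have yA : y \in Acell P Q by rewrite -mem_enum E !inE eqxx orbT.
    move: xA yA; rewrite !inE !negb_or => /andP[xP xQ] /andP[yP yQ].
    by rewrite good_tperm.
  move=> _; have := enum_uniq (Acell P Q); rewrite E /= inE negb_or => /andP[/andP[xy _] _].
  by rewrite /wtz /= odd_mul_tperm xy /= signrN !mulNr.
have : F *+ 2 = 0 by rewrite mulr2n {1}FN addNr.
by move/eqP; rewrite mulrn_eq0 /= => /eqP.
Qed.

Definition compz n (z : {perm 'I_n} * ({set {set 'I_n}} * {set {set 'I_n}})) :=
  (z.1, (porbits z.1 :\: z.2.1, porbits z.1 :\: z.2.2)).

Lemma compK_eq (T : finType) (U P : {set T}) : (U :\: (U :\: P) == P) = (P \subset U).
Proof.
apply/eqP/idP => [<-|sP]; first exact: subsetDl.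
apply/setP => c; rewrite !inE; case cP: (c \in P); rewrite ?andbF /=; last by case: (c \in U).
by rewrite (subsetP sP c cP).
Qed.

Lemma compzK_eq n (j : {perm 'I_n} * ({set {set 'I_n}} * {set {set 'I_n}})) :
  (compz (compz j) == j) = (j.2.1 \subset porbits j.1) && (j.2.2 \subset porbits j.1).
Proof.
case: j => s [P Q]; rewrite /compz /=; apply/eqP/andP => [[E1 E2]|[sP sQ]].
  by split; [rewrite -E1 | rewrite -E2]; exact: subsetDl.
by congr (_, (_, _)); apply/eqP; rewrite compK_eq.
Qed.

Lemma card_setC_n n (X : {set 'I_n}) : #|~: X| = (n - #|X|)%N.
Proof. have := cardsC X; rewrite card_ord; lia. Qed.

Lemma D_zero n k l :
  \sum_(z : {perm 'I_n} * ({set {set 'I_n}} * {set {set 'I_n}}) | good k l z && (#|Acell z.2.1 z.2.2| <= 1)%N && (1 < #|Dcell z.2.1 z.2.2|)%N)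
     wtz z = 0.
Proof.
have [kn|kn] := leqP k n; last first.
  rewrite big1 // => z /andP[/andP[/and4P[_ _ /eqP cP _] _] _].
  by have := max_card (cover z.2.1); rewrite cP card_ord; lia.
have [ln|ln] := leqP l n; last first.
  rewrite big1 // => z /andP[/andP[/and4P[_ _ _ /eqP cP] _] _].
  by have := max_card (cover z.2.2); rewrite cP card_ord; lia.
rewrite (reindex_onto (@compz n) (@compz n)); last first.
  move=> [s [P Q]] /andP[/andP[/and4P[sP sQ _ _] _] _].
  by rewrite /compz /=; congr (_, (_, _)); apply/eqP; rewrite compK_eq.
rewrite -[RHS](@inv_zero n (n - k)%N (n - l)%N (fun pq : {set {set 'I_n}} * {set {set 'I_n}} => #|Dcell pq.1 pq.2| <= 1)%N).
apply: eq_big => [[s [P Q]]|[s [P Q]]] /=.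
  rewrite compzK_eq /compz /=.
  have [sP|sP] := boolP (P \subset porbits s); last by rewrite /good /= (negbTE sP) /= !andbF.
  have [sQ|sQ] := boolP (Q \subset porbits s); last by rewrite /good /= (negbTE sQ) /= !andbF.
  have e1 : ~: (~: cover P :|: ~: cover Q) = cover P :&: cover Q by rewrite setCU !setCK.
  have e2 : ~: cover P :&: ~: cover Q = ~: (cover P :|: cover Q) by rewrite setCU.
  rewrite /good /= sP sQ !subsetDl /= !andbT /Acell /Dcell !(cover_compl sP) !(cover_compl sQ) e1 e2.
  rewrite !(card_setC_n (cover _)).
  have cPn : (#|cover P| <= n)%N by have := max_card (cover P); rewrite card_ord.
  have cQn : (#|cover Q| <= n)%N by have := max_card (cover Q); rewrite card_ord.
  have -> : ((n - #|cover P|)%N == k) = (#|cover P| == n - k)%N by apply/eqP/eqP; lia.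
  have -> : ((n - #|cover Q|)%N == l) = (#|cover Q| == n - l)%N by apply/eqP/eqP; lia.
  by rewrite -!andbA; do 2 congr (_ && _); rewrite andbC.
move=> /andP[_]; rewrite compzK_eq /= => /andP[sP sQ].
rewrite /wtz /compz /= (wv_compl sP) (wv_compl sQ) sg_wv.
by rewrite mulrCA !mulrA wv_sqr mul1r -mulrA mulrCA.
Qed.

Lemma porbits_memE n (s : {perm 'I_n}) c x : c \in porbits s -> x \in c -> porbit s x = c.
Proof. by case/imsetP => y _ -> xy; apply/eqP; rewrite eq_porbit_mem. Qed.

Lemma mem_cover_c n (s : {perm 'I_n}) (V : {set {set 'I_n}}) c x :
  V \subset porbits s -> c \in porbits s -> x \in c -> (x \in cover V) = (c \in V).
Proof. by move=> sV cU xc; rewrite (mem_cover_porbits _ sV) (porbits_memE cU xc). Qed.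

Lemma gs1 n (c : {set 'I_n}) : #|c| = 1%N -> gs c = 1.
Proof. by move=> H; rewrite /gs H expr2 mulrNN mulr1. Qed.

Lemma gs_sqr n (c : {set 'I_n}) : gs c * gs c = 1.
Proof. by rewrite -expr2 sqrr_sign. Qed.

Lemma prod_in_U n (s : {perm 'I_n}) (P : {set {set 'I_n}}) :
  P \subset porbits s ->
  \prod_(c in P) gs c = \prod_(c in porbits s) (if c \in P then gs c else 1).
Proof.
move=> sP; rewrite -big_mkcondr; apply: eq_bigl => c /=.
by case cP: (c \in P); rewrite ?andbF ?andbT ?(subsetP sP c cP).
Qed.

Lemma wt_one n k l (z : {perm 'I_n} * ({set {set 'I_n}} * {set {set 'I_n}})) :
  good k l z -> (#|Acell z.2.1 z.2.2| <= 1)%N -> (#|Dcell z.2.1 z.2.2| <= 1)%N ->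
  wtz z = 1.
Proof.
case: z => s [P Q] /and4P[/= sP sQ _ _] /= hA hD.
rewrite /wtz /= sg_wv !(wv_prod (s := s)) ?subxx // !(prod_in_U sP) (prod_in_U sQ).
rewrite (prod_in_U (subxx _)) -!big_split /=; apply: big1 => c cU; rewrite cU.
have c1 : (0 < #|c|)%N := porbits_card_gt0 cU.
case cP: (c \in P); case cQ: (c \in Q).
- have sub : c \subset Dcell P Q.
    by apply/subsetP => x xc; rewrite inE (mem_cover_c sP cU xc) (mem_cover_c sQ cU xc) cP cQ.
  rewrite gs1 ?mulr1 //; apply/eqP; rewrite eqn_leq c1 andbT.
  exact: leq_trans (subset_leq_card sub) hD.
- by rewrite mulr1 gs_sqr.
- by rewrite mulr1 gs_sqr.
- have sub : c \subset Acell P Q.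
    by apply/subsetP => x xc; rewrite !inE (mem_cover_c sP cU xc) (mem_cover_c sQ cU xc) cP cQ.
  rewrite gs1 ?mulr1 //; apply/eqP; rewrite eqn_leq c1 andbT.
  exact: leq_trans (subset_leq_card sub) hA.
Qed.

Lemma foldr_prod (s : seq nat) : foldr muln 1%N s = (\prod_(x <- s) x)%N.
Proof. by elim: s => [|x s IH] /=; rewrite ?big_nil ?big_cons ?IH. Qed.

Lemma card_typed (T : finType) (U : {set T}) (sz : T -> nat) m
    (a : {ffun 'I_m.+1 -> 'I_m.+1}) :
  #|[set P : {set T} | (P \subset [set c in U | (sz c <= m)%N]) &&
      [forall i : 'I_m.+1, #|[set c in P | sz c == i]| == a i]]| =
  (\prod_(i < m.+1) 'C(#|[set c in U | sz c == i]|, a i))%N.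
Proof.
set V := fun i : 'I_m.+1 => [set c in U | sz c == i].
set F := fun i : 'I_m.+1 => [set Q : {set T} | Q \subset V i & #|Q| == a i].
have -> : (\prod_(i < m.+1) 'C(#|[set c in U | sz c == i]|, a i))%N = #|family F|.
  rewrite card_family foldr_prod /image_mem big_map big_enum /=.
  by apply: eq_bigr => i _; rewrite /F cards_draws.
pose S := [set P : {set T} | (P \subset [set c in U | (sz c <= m)%N]) &&
      [forall i : 'I_m.+1, #|[set c in P | sz c == i]| == a i]].
change (#|S| = #|family F|).
pose phi (P : {set T}) := [ffun i => P :&: V i].
have VI (P : {set T}) (i : 'I_m.+1) : P \subset U -> [set c in P | sz c == i] = P :&: V i.
  move=> sPU; apply/setP => c; rewrite !inE.
  by case cP: (c \in P); rewrite ?(subsetP sPU c cP) ?andbF.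
have inW (c : T) : (c \in U) && (sz c <= m)%N -> c \in V (inord (sz c)).
  by case/andP => cU cm; rewrite /V inE cU inordK ?ltnS ?eqxx.
have phi_inj : {in S &, injective phi}.
  move=> P P'; rewrite !inE => /andP[sP _] /andP[sP' _] /ffunP E.
  apply/setP => c; apply/idP/idP => Hc.
  - have cW : c \in V (inord (sz c)) by apply: inW; have := subsetP sP c Hc; rewrite inE.
    by have := E (inord (sz c)); rewrite !ffunE => /setP/(_ c); rewrite !in_setI Hc cW !andbT => <-.
  - have cW : c \in V (inord (sz c)) by apply: inW; have := subsetP sP' c Hc; rewrite inE.
    by have := E (inord (sz c)); rewrite !ffunE => /setP/(_ c); rewrite !in_setI Hc cW !andbT => ->.
rewrite -(card_in_imset phi_inj); apply: eq_card => f.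
apply/imsetP/familyP => [[P PS ->] i|Ff].
  move: PS; rewrite !inE ffunE => /andP[sP /forallP/(_ i) /eqP ci].
  have sPU : P \subset U by apply: subset_trans sP _; apply/subsetP => c; rewrite inE => /andP[].
  by rewrite subsetIr -(VI P i sPU) ci eqxx.
have fV i : f i \subset V i by have := Ff i; rewrite inE => /andP[].
have fa i : #|f i| = a i by have := Ff i; rewrite inE => /andP[_ /eqP].
have fVi i j c : c \in f j -> c \in V i -> i = j.
  move=> cj ci; have := subsetP (fV j) c cj; move: ci; rewrite !inE => /andP[_ /eqP ->] /andP[_ /eqP e].
  by apply: val_inj.
have key i : (\bigcup_j f j) :&: V i = f i.
  apply/setP => c; rewrite inE; apply/andP/idP => [[/bigcupP[j _ cj] ci]|ci].
    by rewrite (fVi _ _ _ cj ci).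
  by split; [apply/bigcupP; exists i | apply: (subsetP (fV i))].
have sUU : \bigcup_j f j \subset U.
  by apply/subsetP => c /bigcupP[j _ cj]; have := subsetP (fV j) c cj; rewrite inE => /andP[].
exists (\bigcup_j f j); last by apply/ffunP => i; rewrite ffunE key.
rewrite inE; apply/andP; split.
  apply/subsetP => c /bigcupP[j _ cj]; have := subsetP (fV j) c cj.
  by rewrite !inE => /andP[-> /eqP ->]; rewrite -ltnS ltn_ord.
by apply/forallP => i; rewrite VI // key fa.
Qed.

Lemma sum_by_size n (P : {set {set 'I_n}}) m (f : nat -> nat) :
  (forall c, c \in P -> #|c| <= m)%N ->
  (\sum_(c in P) f #|c| = \sum_(i < m.+1) f i * #|[set c in P | #|c| == i]|)%N.
Proof.
move=> Pm.
rewrite (partition_big (fun c : {set 'I_n} => (inord #|c| : 'I_m.+1)) xpredT) //=.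
apply: eq_bigr => i _.
rewrite mulnC -sum_nat_const; apply: eq_big => [c|c].
  rewrite inE; case cP: (c \in P) => //=.
  have cm := Pm c cP.
  apply/eqP/eqP => [<-|e]; first by rewrite inordK // ltnS.
  by apply: val_inj; rewrite /= inordK // ltnS.
move=> /andP[cP /eqP <-]; rewrite inordK // ltnS; exact: Pm.
Qed.

Lemma E_porbits n (s : {perm 'I_n}) m :
  Ecp m (cyc s) =
  \sum_(P : {set {set 'I_n}} | (P \subset porbits s) && (#|cover P| == m)) wv P.
Proof.
pose ty (P : {set {set 'I_n}}) : {ffun 'I_m.+1 -> 'I_m.+1} :=
  [ffun i : 'I_m.+1 => inord #|[set c in P | #|c| == i]|].
have f1 (P : {set {set 'I_n}}) : P \subset porbits s -> #|cover P| = m -> forall c, c \in P -> (0 < #|c| <= m)%N.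
  move=> sP cPm c cP; rewrite (porbits_card_gt0 (subsetP sP c cP)) /= -cPm.
  by apply: subset_leq_card; apply: bigcup_sup.
have f2 (P : {set {set 'I_n}}) (i : nat) : P \subset porbits s -> #|cover P| = m -> (#|[set c in P | #|c| == i]| <= m)%N.
  move=> sP cPm; rewrite -cPm; apply: (leq_trans _ (card_le_cover sP)).
  by apply: subset_leq_card; apply/subsetP => c; rewrite inE => /andP[].
have f3 (P : {set {set 'I_n}}) (g : nat -> nat) : P \subset porbits s -> #|cover P| = m ->
    (\sum_(c in P) g #|c| = \sum_(i < m.+1) g i * ty P i)%N.
  move=> sP cPm; rewrite (sum_by_size (m := m)); last by move=> c /(f1 _ sP cPm) /andP[].
  by apply: eq_bigr => i _; rewrite ffunE inordK // ltnS f2.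
rewrite (partition_big ty (@is_partn m)) /=; last first.
  move=> P /andP[sP /eqP cPm]; apply/andP; split.
    apply/eqP/val_inj; rewrite /= ffunE inordK ?ltnS ?f2 //.
    apply/eqP; rewrite cards_eq0; apply/eqP/setP => c; rewrite !inE.
    case cP: (c \in P) => //=; have /andP[+ _] := f1 P sP cPm c cP.
    by rewrite lt0n => /negbTE.
  rewrite -[X in _ == X]cPm (card_cover_porbits sP).
  by rewrite (f3 P id sP cPm).
rewrite /Ecp; apply: eq_bigr => a /andP[/eqP a0 /eqP am].
pose Sa := [set P : {set {set 'I_n}} | (P \subset [set c in porbits s | (#|c| <= m)%N]) &&
      [forall i : 'I_m.+1, #|[set c in P | #|c| == i]| == a i]].
have eqS (P : {set {set 'I_n}}) : ((P \subset porbits s) && (#|cover P| == m) && (ty P == a)) = (P \in Sa).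
  rewrite inE; apply/idP/idP.
    move=> /andP[/andP[sP /eqP cPm] /eqP <-]; apply/andP; split.
      apply/subsetP => c cP; rewrite inE (subsetP sP c cP).
      by have /andP[_ ->] := f1 P sP cPm c cP.
    by apply/forallP => i; rewrite ffunE inordK // ltnS f2.
  move=> /andP[sW /forallP ca].
  have sP : P \subset porbits s.
    by apply: subset_trans sW _; apply/subsetP => c; rewrite inE => /andP[].
  have Pm c : c \in P -> (#|c| <= m)%N.
    by move=> cP; have := subsetP sW c cP; rewrite inE => /andP[].
  have cPm : #|cover P| = m.
    rewrite (card_cover_porbits sP) (sum_by_size (m := m) id Pm) -[RHS]am.
    by apply: eq_bigr => i _; rewrite (eqP (ca i)).
  rewrite sP cPm eqxx /=; apply/eqP/ffunP => i; rewrite ffunE (eqP (ca i)).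
  by apply: val_inj; rewrite /= inordK.
under eq_bigl do rewrite eqS.
have wP (P : {set {set 'I_n}}) : P \in Sa -> wv P = (-1) ^+ (m - lenp a).
  rewrite -eqS => /andP[/andP[sP /eqP cPm] /eqP tyP].
  have lP : #|P| = lenp a.
    rewrite -sum1_card (f3 P (fun=> 1%N) sP cPm) /lenp; apply: eq_bigr => i _.
    by rewrite mul1n tyP.
  have le : (lenp a <= m)%N by rewrite -lP -cPm (card_le_cover sP).
  by rewrite /wv cPm lP sign_sub.
rewrite (eq_bigr _ wP) sumr_const.
rewrite (card_typed (porbits s) (fun c : {set 'I_n} => #|c|) a).
by rewrite mulr_natr.
Qed.

Definition pact n (x : {set 'I_n} * {set 'I_n}) (s : {perm 'I_n}) :=
  (s @: x.1, s @: x.2).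

Lemma pact1 n : (@pact n)^~ 1%g =1 id.
Proof.
move=> [S T]; rewrite /pact /=.
have e (A : {set 'I_n}) : [set (1%g : {perm 'I_n}) x | x in A] = A.
  by rewrite (eq_imset _ (@perm1 _)) imset_id.
by rewrite !e.
Qed.

Lemma pactM n x : act_morph (@pact n) x.
Proof.
move=> a b; case: x => S T; rewrite /pact /=.
have e (A : {set 'I_n}) : [set (a * b)%g x | x in A] = [set b x | x in [set a y | y in A]].
  by rewrite -imset_comp; apply: eq_imset => y; rewrite permM.
by rewrite !e.
Qed.

Definition pairAct n := TotalAction (@pact1 n) (@pactM n).

Definition Xset n k l := [set x : {set 'I_n} * {set 'I_n} |
  [&& #|x.1| == k, #|x.2| == l, #|x.1 :&: x.2| <= 1 & n <= #|x.1 :|: x.2|.+1]%N].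

Lemma pact_card n (x : {set 'I_n} * {set 'I_n}) s :
  [/\ #|(pact x s).1| = #|x.1|, #|(pact x s).2| = #|x.2|,
      #|(pact x s).1 :&: (pact x s).2| = #|x.1 :&: x.2| &
      #|(pact x s).1 :|: (pact x s).2| = #|x.1 :|: x.2|].
Proof.
have inj : injective s := @perm_inj _ s.
case: x => S T; rewrite /pact /= -imsetU -imsetI; last by move=> ? ? _ _; apply: inj.
by split; rewrite card_imset.
Qed.

Lemma acts_X n k l : [acts [set: {perm 'I_n}], on Xset n k l | pairAct n].
Proof.
apply/subsetP => s _; apply/astabsP => x.
rewrite !inE; have [-> -> -> ->] := pact_card x s.
by [].
Qed.

Lemma nth_index_cat1 (T : eqType) (l1 l2 l1' l2' : seq T) x :
  size l1 = size l1' -> x \in l1 ->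
  nth x (l1' ++ l2') (index x (l1 ++ l2)) = nth x l1' (index x l1).
Proof. by move=> e xl; rewrite index_cat xl nth_cat -e index_mem xl. Qed.

Lemma nth_index_cat2 (T : eqType) (l1 l2 l1' l2' : seq T) x :
  size l1 = size l1' -> x \notin l1 ->
  nth x (l1' ++ l2') (index x (l1 ++ l2)) = nth x l2' (index x l2).
Proof.
by move=> e xl; rewrite index_cat (negbTE xl) nth_cat -e ltnNge leq_addr /= addKn.
Qed.

Lemma nth_index_in (T : eqType) (l l' : seq T) x :
  size l = size l' -> x \in l -> nth x l' (index x l) \in l'.
Proof. by move=> e xl; rewrite mem_nth // -e index_mem. Qed.

Definition cellL n (S T : {set 'I_n}) :=
  enum (~: (S :|: T)) ++ enum (S :\: T) ++ enum (T :\: S) ++ enum (S :&: T).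

Lemma cellL_mem n (S T : {set 'I_n}) z : z \in cellL S T.
Proof.
rewrite /cellL !mem_cat !mem_enum !inE.
by case: (z \in S); case: (z \in T).
Qed.

Lemma cellL_size n (S T : {set 'I_n}) : size (cellL S T) = n.
Proof.
rewrite /cellL !size_cat -!cardE.
have h1 := cardsC (S :|: T); have h2 := cardsU S T; have h3 := cardsD S T.
have h4 := cardsD T S; rewrite setIC in h4.
have h5 : (#|S :&: T| <= #|S|)%N by apply: subset_leq_card; apply: subsetIl.
have h6 : (#|S :&: T| <= #|T|)%N by apply: subset_leq_card; apply: subsetIr.
have h7 : (#|S :|: T| <= n)%N by have := max_card (S :|: T); rewrite card_ord.
rewrite card_ord in h1; lia.
Qed.

Lemma cellL_uniq n (S T : {set 'I_n}) : uniq (cellL S T).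
Proof.
apply: (leq_size_uniq (enum_uniq 'I_n)).
  by move=> z _; apply: cellL_mem.
by rewrite cellL_size size_enum_ord.
Qed.

Lemma trans_pairs n (S T S' T' : {set 'I_n}) :
  #|S| = #|S'| -> #|T| = #|T'| -> #|S :&: T| = #|S' :&: T'| ->
  exists g : {perm 'I_n}, pact (S, T) g = (S', T').
Proof.
move=> eS eT eD.
have eU : #|S :|: T| = #|S' :|: T'| by rewrite !cardsU eS eT eD.
have eA : size (enum (~: (S :|: T))) = size (enum (~: (S' :|: T'))).
  by rewrite -!cardE !card_setC_n eU.
have eB : size (enum (S :\: T)) = size (enum (S' :\: T')).
  by rewrite -!cardE !cardsD eS eD.
have eC : size (enum (T :\: S)) = size (enum (T' :\: S')).
  by rewrite -!cardE !cardsD eT setIC eD setIC.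
have eDs : size (enum (S :&: T)) = size (enum (S' :&: T')) by rewrite -!cardE eD.
pose f z := nth z (cellL S' T') (index z (cellL S T)).
have f_inj : injective f.
  move=> z1 z2; rewrite /f => e.
  have lt z : (index z (cellL S T) < size (cellL S' T'))%N.
    have -> : size (cellL S' T') = size (cellL S T) by rewrite !cellL_size.
    by rewrite index_mem cellL_mem.
  move: e; rewrite (set_nth_default z1 z2 (lt z2)) => /eqP.
  rewrite nth_uniq ?lt ?cellL_uniq // => /eqP.
  by move=> e; apply: (index_inj z1 (cellL_mem S T z1) (cellL_mem S T z2) e).
pose g := perm f_inj.
have gB z : z \in S :\: T -> g z \in S' :\: T'.
  move=> zB; rewrite permE /f /cellL.
  have zA : z \notin enum (~: (S :|: T)).
    by move: zB; rewrite mem_enum !inE => /andP[_ ->].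
  rewrite nth_index_cat2 // nth_index_cat1 ?mem_enum //.
  by rewrite -mem_enum; apply: nth_index_in; rewrite ?mem_enum.
have gC z : z \in T :\: S -> g z \in T' :\: S'.
  move=> zC; rewrite permE /f /cellL.
  have zA : z \notin enum (~: (S :|: T)).
    by move: zC; rewrite mem_enum !inE => /andP[_ ->]; rewrite orbT.
  have zB : z \notin enum (S :\: T).
    by move: zC; rewrite mem_enum !inE => /andP[/negbTE -> _]; rewrite andbF.
  rewrite nth_index_cat2 // nth_index_cat2 // nth_index_cat1 ?mem_enum //.
  by rewrite -mem_enum; apply: nth_index_in; rewrite ?mem_enum.
have gD z : z \in S :&: T -> g z \in S' :&: T'.
  move=> zD; rewrite permE /f /cellL.
  have zA : z \notin enum (~: (S :|: T)).
    by move: zD; rewrite mem_enum !inE => /andP[-> _].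
  have zB : z \notin enum (S :\: T).
    by move: zD; rewrite mem_enum !inE => /andP[_ ->].
  have zC : z \notin enum (T :\: S).
    by move: zD; rewrite mem_enum !inE => /andP[-> _].
  rewrite nth_index_cat2 // nth_index_cat2 // nth_index_cat2 //.
  by rewrite -mem_enum; apply: nth_index_in; rewrite ?mem_enum.
exists g; rewrite /pact /=; congr (_, _); apply/eqP; rewrite eqEcard card_imset ?eS ?eT ?leqnn ?andbT;
  try exact: perm_inj.
- apply/subsetP => _ /imsetP[z zS ->].
  case zT: (z \in T).
    by have := gD z; rewrite !inE zS zT => /(_ isT) /andP[].
  by have := gB z; rewrite !inE zS zT => /(_ isT) /andP[].
- apply/subsetP => _ /imsetP[z zT ->].
  case zS: (z \in S).
    by have := gD z; rewrite !inE zS zT => /(_ isT) /andP[].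
  by have := gC z; rewrite !inE zS zT => /(_ isT) /andP[].
Qed.

Definition typ n (x : {set 'I_n} * {set 'I_n}) : 'I_2 * 'I_n.+1 * 'I_n.+1 * 'I_2 :=
  (inord (n - #|x.1 :|: x.2|), inord (#|x.1| - #|x.1 :&: x.2|),
   inord (#|x.2| - #|x.1 :&: x.2|), inord #|x.1 :&: x.2|).

Definition qset n k l := [set t : 'I_2 * 'I_n.+1 * 'I_n.+1 * 'I_2 |
     let: (a, b, c, d) := t in
     [&& (a + b + c + d == n)%N,
         (b * 1 + c * 0 + d * 1 == k)%N &
         (b * 0 + c * 1 + d * 1 == l)%N]].

Lemma qstarE n k l : qstar n k l = #|qset n k l|.
Proof. by []. Qed.

Lemma card_imset_rel (T U V : finType) (X : {set T}) (f : T -> U) (g : T -> V) :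
  {in X &, forall x y, (f x == f y) = (g x == g y)} -> #|f @: X| = #|g @: X|.
Proof.
move=> fg; pose h x := (f x, g x).
have e1 : f @: X = fst @: (h @: X) by rewrite -imset_comp.
have e2 : g @: X = snd @: (h @: X) by rewrite -imset_comp.
have i1 : {in h @: X &, injective fst}.
  move=> _ _ /imsetP[x xX ->] /imsetP[y yX ->] /= e.
  by rewrite /h e; congr (_, _); apply/eqP; rewrite -fg // e.
have i2 : {in h @: X &, injective snd}.
  move=> _ _ /imsetP[x xX ->] /imsetP[y yX ->] /= e.
  by rewrite /h e; congr (_, _); apply/eqP; rewrite fg // e.
by rewrite e1 e2 (card_in_imset i1) (card_in_imset i2).
Qed.

Lemma typ_pact n (x : {set 'I_n} * {set 'I_n}) s : typ (pact x s) = typ x.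
Proof. by rewrite /typ; have [-> -> -> ->] := pact_card x s. Qed.

Lemma orbit_typ n k l :
  {in Xset n k l &, forall x y,
    (orbit (pairAct n) [set: {perm 'I_n}] x == orbit (pairAct n) [set: {perm 'I_n}] y)
    = (typ x == typ y)}.
Proof.
move=> x y xX yX; apply/eqP/eqP.
  move=> eo; have : y \in orbit (pairAct n) [set: {perm 'I_n}] x by rewrite eo orbit_refl.
  by case/orbitP => a _ <-; rewrite /= typ_pact.
move=> et.
move: xX yX; case: x et => S T; case: y => S' T'; rewrite !inE /=.
move=> et /and4P[/eqP cS /eqP cT dX _] /and4P[/eqP cS' /eqP cT' dY _].
have eD : #|S :&: T| = #|S' :&: T'|.
  have := congr1 (fun t => val t.2) et; rewrite /= !inordK //; lia.
have [g eg] := trans_pairs (etrans cS (esym cS')) (etrans cT (esym cT')) eD.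
apply/orbit_eqP; rewrite orbit_sym -eg.
exact: (mem_orbit (pairAct n) (S, T) (in_setT g)).
Qed.

Lemma card_pre n j : (j <= n)%N -> #|[set i : 'I_n | (i < j)%N]| = j.
Proof.
move=> jn.
have -> : [set i : 'I_n | (i < j)%N] = widen_ord jn @: [set: 'I_j].
  apply/setP => i; rewrite inE; apply/idP/imsetP => [ij|[m _ ->]]; last by have := ltn_ord m.
  by exists (Ordinal ij) => //; apply: val_inj.
rewrite card_imset ?cardsT ?card_ord //.
by move=> u v /(congr1 val) /= e; apply: val_inj.
Qed.

Lemma typ_X n k l : (@typ n) @: Xset n k l = qset n k l.
Proof.
apply/setP => t; apply/imsetP/idP.
  move=> [[S T] xX ->]; move: xX; rewrite !inE /= => /and4P[/eqP cS /eqP cT dX uX].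
  have h2 := cardsU S T.
  have h5 : (#|S :&: T| <= #|S|)%N by apply: subset_leq_card; apply: subsetIl.
  have h6 : (#|S :&: T| <= #|T|)%N by apply: subset_leq_card; apply: subsetIr.
  have h7 : (#|S :|: T| <= n)%N by have := max_card (S :|: T); rewrite card_ord.
  set u := #|S :|: T| in h2 h7 uX *; set dd := #|S :&: T| in h2 h5 h6 dX *.
  set cs := #|S| in cS h2 h5 *; set ct := #|T| in cT h2 h6 *.
  rewrite !inordK; [apply/and3P; split; apply/eqP; lia | lia..].
case: t => [[[a b] c] d]; rewrite inE /= => /and3P[/eqP e1 /eqP e2 /eqP e3].
have da := ltn_ord d; have aa := ltn_ord a.
pose S := [set i : 'I_n | (i < b + d)%N].
pose T := [set i : 'I_n | (b <= i < b + d + c)%N].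
have cS : #|S| = (b + d)%N by rewrite card_pre //; lia.
have eT : T = [set i : 'I_n | (i < b + d + c)%N] :\: [set i : 'I_n | (i < b)%N].
  by apply/setP => i; rewrite !inE; lia.
have cT : #|T| = (d + c)%N.
  rewrite eT cardsDS ?card_pre //; try lia.
  by apply/subsetP => i; rewrite !inE; lia.
have eI : S :&: T = [set i : 'I_n | (i < b + d)%N] :\: [set i : 'I_n | (i < b)%N].
  by apply/setP => i; rewrite !inE; lia.
have cI : #|S :&: T| = d.
  rewrite eI cardsDS ?card_pre //; try lia.
  by apply/subsetP => i; rewrite !inE; lia.
have eU : S :|: T = [set i : 'I_n | (i < b + d + c)%N].
  by apply/setP => i; rewrite !inE; lia.
have cU : #|S :|: T| = (b + d + c)%N by rewrite eU card_pre //; lia.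
exists (S, T).
  rewrite inE /= cS cT cI cU.
  apply/and4P; split; try apply/eqP; lia.
rewrite /typ /= cS cT cI cU.
congr (_, _, _, _); apply: val_inj; rewrite /= inordK //; lia.
Qed.

Lemma cardC_le1 n (X : {set 'I_n}) : (#|~: X| <= 1)%N = (n <= #|X|.+1)%N.
Proof. rewrite card_setC_n; apply/idP/idP; lia. Qed.

Lemma card_fix n k l (s : {perm 'I_n}) :
  #|[set pq : {set {set 'I_n}} * {set {set 'I_n}} | good k l (s, pq) &&
      (#|Acell pq.1 pq.2| <= 1)%N && (#|Dcell pq.1 pq.2| <= 1)%N]| =
  #|('Fix_(Xset n k l | pairAct n)[s])%g|.
Proof.
pose phi (pq : {set {set 'I_n}} * {set {set 'I_n}}) := (cover pq.1, cover pq.2).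
have phi_inj : {in [set pq : {set {set 'I_n}} * {set {set 'I_n}} | good k l (s, pq) &&
      (#|Acell pq.1 pq.2| <= 1)%N && (#|Dcell pq.1 pq.2| <= 1)%N] &, injective phi}.
  move=> [P Q] [P' Q']; rewrite !inE /= => /andP[/andP[/and4P[/= sP sQ _ _] _] _].
  move=> /andP[/andP[/and4P[/= sP' sQ' _ _] _] _] [e1 e2].
  by rewrite (cover_inj sP sP' e1) (cover_inj sQ sQ' e2).
rewrite -(card_in_imset phi_inj); apply: eq_card => x.
apply/imsetP/idP.
  move=> [[P Q]]; rewrite inE /= => /andP[/andP[/and4P[/= sP sQ /eqP cP /eqP cQ] hA] hD] ->.
  apply/setIP; split.
    rewrite inE /= cP cQ !eqxx /=; rewrite /Dcell in hD; rewrite hD /=.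
    by move: hA; rewrite /Acell cardC_le1.
  by apply/afix1P; rewrite /= /pact /= (cover_fix sP) (cover_fix sQ).
case: x => S T /setIP[]; rewrite inE /= => /and4P[/eqP cS /eqP cT dX uX] /afix1P.
rewrite /= /pact /= => -[fS fT].
exists ([set c in porbits s | c \subset S], [set c in porbits s | c \subset T]); last first.
  by rewrite /phi /= !cover_inv.
have sub (A : {set 'I_n}) : [set c in porbits s | c \subset A] \subset porbits s.
  by apply/subsetP => c; rewrite inE => /andP[].
by rewrite inE /good /= !sub /= /Acell /Dcell !cover_inv // cS cT !eqxx dX /= cardC_le1 uX.
Qed.

Lemma card_G n : #|[set: {perm 'I_n}]| = n`!.
Proof.
rewrite -[n in RHS]card_ord -cardsT -card_perm; apply: eq_card => s.
by rewrite !inE; apply/esym/subsetP => x; rewrite inE.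
Qed.

Lemma count_main n k l :
  (\sum_(s : {perm 'I_n})
    #|[set pq : {set {set 'I_n}} * {set {set 'I_n}} | good k l (s, pq) &&
      (#|Acell pq.1 pq.2| <= 1)%N && (#|Dcell pq.1 pq.2| <= 1)%N]|)%N = (n`! * qstar n k l)%N.
Proof.
under eq_bigr do rewrite card_fix.
have := Frobenius_Cauchy (acts_X n k l); rewrite card_G => FC.
rewrite (eq_bigl (fun s => s \in [set: {perm 'I_n}])); last by move=> s; rewrite inE.
rewrite FC mulnC; congr (_ * _)%N.
rewrite qstarE -typ_X; apply: card_imset_rel.
exact: orbit_typ.
Qed.

Lemma Fsum n k l :
  \sum_(s : {perm 'I_n}) (-1) ^+ odd_perm s * (Ecp k (cyc s) * Ecp l (cyc s)) =
  (n`! * qstar n k l)%:R.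
Proof.
have step (s : {perm 'I_n}) : (-1) ^+ odd_perm s * (Ecp k (cyc s) * Ecp l (cyc s)) =
    \sum_(pq : {set {set 'I_n}} * {set {set 'I_n}} | good k l (s, pq)) wtz (s, pq).
  rewrite !E_porbits mulr_suml mulr_sumr.
  rewrite (eq_bigr (fun P : {set {set 'I_n}} => \sum_(Q : {set {set 'I_n}} | (Q \subset porbits s) && (#|cover Q| == l))
     (-1) ^+ odd_perm s * wv P * wv Q)); last by move=> P _; rewrite mulrA mulr_sumr.
  rewrite pair_big_dep /=; apply: eq_big => [[P Q]|[P Q] _] /=.
    rewrite /good /=.
    by case: (P \subset _); case: (Q \subset _); case: (#|cover P| == k); case: (#|cover Q| == l).
  by rewrite /wtz.
under eq_bigr do rewrite step.
rewrite pair_big_dep /=.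
rewrite (eq_bigl (fun z => good k l z)); last by case.
rewrite (eq_bigr (fun z => wtz z)); last by case.
rewrite (bigID (fun z => 1 < #|Acell z.2.1 z.2.2|)%N) /=.
have -> : \sum_(z : {perm 'I_n} * ({set {set 'I_n}} * {set {set 'I_n}}) |
    good k l z && (1 < #|Acell z.2.1 z.2.2|)%N) wtz z = 0.
  apply: (etrans _ (inv_zero k l (fun _ : {set {set 'I_n}} * {set {set 'I_n}} => true))).
  by apply: eq_bigl => z; rewrite andbT.
rewrite add0r (bigID (fun z => 1 < #|Dcell z.2.1 z.2.2|)%N) /=.
have -> : \sum_(z : {perm 'I_n} * ({set {set 'I_n}} * {set {set 'I_n}}) |
    good k l z && ~~ (1 < #|Acell z.2.1 z.2.2|)%N &&
             (1 < #|Dcell z.2.1 z.2.2|)%N) wtz z = 0.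
  apply: (etrans _ (@D_zero n k l)); apply: eq_bigl => z; by rewrite -leqNgt.
rewrite add0r.
rewrite (eq_bigr (fun _ => 1)); last first.
  move=> z /andP[/andP[g hA] hD]; rewrite -leqNgt in hA; rewrite -leqNgt in hD.
  exact: (wt_one g hA hD).
rewrite -(@count_main n k l) natr_sum.
rewrite (eq_bigr (fun s : {perm 'I_n} =>
   \sum_(pq : {set {set 'I_n}} * {set {set 'I_n}} | good k l (s, pq) &&
      (#|Acell pq.1 pq.2| <= 1)%N && (#|Dcell pq.1 pq.2| <= 1)%N) (1 : rat))); last first.
  move=> s _; rewrite -sum1_card natr_sum; apply: eq_bigl => pq; by rewrite inE.
rewrite pair_big_dep /=; apply: eq_bigl => -[s pq] /=; by rewrite -!leqNgt.
Qed.

Unset Implicit Arguments.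

Theorem corollary3p3 (k l n : nat) (hlk : (l <= k)%N) :
  smoment n (Scp k l) =
  if (0 < l)%N then (qstar n k l)%:R - (qstar n k.+1 l.-1)%:R
  else (qstar n k l)%:R.
Proof.
rewrite /smoment /Scp.
have nf : (n`!)%:R != 0 :> rat by rewrite pnatr_eq0 -lt0n fact_gt0.
case: l hlk => [|l] hlk /=.
  under eq_bigr do rewrite subr0.
  by rewrite Fsum natrM mulKf.
under eq_bigr do rewrite mulrBr.
by rewrite sumrB !Fsum !natrM -mulrBr mulKf.
Qed.
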